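(* Let $\mathfrak{g}=\mathfrak{W}\oplus\mathfrak{W}$ be the direct sum of two copies of the Witt algebra and let $\bigwedge^2\mathfrak{g}$ carry the $\mathfrak{g}$-module structure induced by the adjoint action. Then $$H^1\big(\mathfrak{W}\oplus\mathfrak{W},\textstyle\bigwedge^2(\mathfrak{W}\oplus\mathfrak{W})\big)=\{0\}.$$ Equivalently: for every linear map $\delta:\mathfrak{g}\to\bigwedge^2\mathfrak{g}$ satisfying $\delta([x,y])=x\cdot\delta(y)-y\cdot\delta(x)$ for all $x,y\in\mathfrak{g}$, there exists $r\in\bigwedge^2\mathfrak{g}$ with $\delta(x)=x\cdot r$ for all $x\in\mathfrak{g}$.
   Context: The Witt algebra $\mathfrak{W}$ is the complex Lie algebra with basis $\{L_m : m\in\mathbb{Z}\}$ and bracket $[L_m,L_n]=(m-n)L_{m+n}$. The algebra $\mathfrak{W}\oplus\mathfrak{W}$ has basis $\{L_m,\bar L_m: m\in\mathbb{Z}\}$ with $[L_m,L_n]=(m-n)L_{m+n}$, $[\bar L_m,\bar L_n]=(m-n)\bar L_{m+n}$, $[L_m,\bar L_n]=0$. For a Lie algebra $\mathfrak{g}$, $\bigwedge^2\mathfrak{g}$ (finite sums of $a\wedge b=a\otimes b-b\otimes a$) is a $\mathfrak{g}$-module via $x\cdot(a\wedge b)=[x,a]\wedge b+a\wedge[x,b]$. A 1-cocycle is a linear map $\delta:\mathfrak{g}\to\bigwedge^2\mathfrak{g}$ with $\delta([x,y])=x\cdot\delta(y)-y\cdot\delta(x)$; a 1-coboundary is a map $x\mapsto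 x\cdot r$ for fixed $r\in\bigwedge^2\mathfrak{g}$; $H^1$ is the quotient of cocycles by coboundaries. *)

(* Defs.v *)
From HB Require Import structures.
From mathcomp Require Import all_boot all_algebra.
From mathcomp Require Import Rstruct.
From mathcomp.real_closed Require Import complex.
From mathcomp Require Import finmap.
From mathcomp.multinomials Require Import monalg.

Set Implicit Arguments.
Unset Strict Implicit.
Unset Printing Implicit Defensive.

Import GRing.Theory.
Local Open Scope ring_scope.

Definition C : fieldType := complex Rdefinitions.R.

(* Basis index of W (+) W: (false, m) ~ L_m, (true, m) ~ \bar L_m. *)
Definition WWidx : Type := (bool * int)%type.

Definition WW : Type := {malg C[WWidx]}.

(* The tensor square g (x) g, with basis e_i (x) e_j indexed by pairs. *)
Definition WW2 : Type := {malg C[(WWidx * WWidx)%type]}.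

Definition e (i : WWidx) : WW := << i >>.

(* Bracket of basis vectors:
   [L_m,L_n]=(m-n)L_{m+n}, [\bar L_m,\bar L_n]=(m-n)\bar L_{m+n},
   [L_m,\bar L_n]=[\bar L_m, L_n]=0. *)
Definition brb (i j : WWidx) : WW :=
  if i.1 == j.1 then ((i.2 - j.2)%:~R : C) *: e (i.1, i.2 + j.2) else 0.

Definition br (x y : WW) : WW :=
  \sum_(i <- msupp x) \sum_(j <- msupp y) (x@_i * y@_j) *: brb i j.

Definition tens (a b : WW) : WW2 :=
  \sum_(i <- msupp a) \sum_(j <- msupp b) (a@_i * b@_j) *: << (i, j) >>.

Definition wedge (a b : WW) : WW2 := tens a b - tens b a.

(* /\^2 g : the finite sums of elements a /\ b *)
Definition in_wedge2 (t : WW2) : Prop :=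
  exists s : seq (WW * WW), t = \sum_(p <- s) wedge p.1 p.2.

(* The (adjoint-induced) action of g on g (x) g, extended linearly from
   x.(a (x) b) = [x,a] (x) b + a (x) [x,b]; on /\^2 g it gives
   x.(a /\ b) = [x,a] /\ b + a /\ [x,b]. *)
Definition act (x : WW) (t : WW2) : WW2 :=
  \sum_(k <- msupp t)
     t@_k *: (tens (br x (e k.1)) (e k.2) + tens (e k.1) (br x (e k.2))).

(* Main.v *)
Require Import Defs.
From HB Require Import structures.
From mathcomp Require Import all_boot all_algebra.
From mathcomp Require Import Rstruct.
From mathcomp.real_closed Require Import complex.
From mathcomp Require Import finmap.
From mathcomp.multinomials Require Import monalg.
From mathcomp Require Import ring lra zify.
Import GRing.Theory Num.Theory.
Local Open Scope ring_scope.

(* Proof strategy: reduce to a combinatorial statement on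
   coefficient functions (cocycles d : index -> pairs -> C), normalise by
   coboundaries (weights, cross terms), and solve the single Witt copy. *)


Set Implicit Arguments.
Unset Strict Implicit.
Unset Printing Implicit Defensive.

Lemma intrC_neq0 (z : int) : z != 0 -> (z%:~R : C) != 0.
Proof. by rewrite intr_eq0. Qed.

Lemma lin1 (x y u v c : C) : x = y -> u - v = c * (x - y) -> u = v.
Proof. by move=> -> /eqP; rewrite subrr mulr0 subr_eq0 => /eqP. Qed.

Lemma lin1n (x y u v : C) : x = y -> u - v = - (x - y) -> u = v.
Proof. by move=> -> /eqP; rewrite subrr oppr0 subr_eq0 => /eqP. Qed.
Lemma lin1p (x y u v : C) : x = y -> u - v = (x - y) -> u = v.
Proof. by move=> -> /eqP; rewrite subrr subr_eq0 => /eqP. Qed.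

Lemma mulIC (z : int) (x : C) : z != 0 -> z%:~R * x = 0 -> x = 0.
Proof. by move=> /intrC_neq0 hz /eqP; rewrite mulf_eq0 (negPf hz) /= => /eqP. Qed.

Definition Ecoc (a : int -> int -> C) := forall m n j,
  (m - n)%:~R * a (m + n) j = (2 * m - j)%:~R * a n (j - m) + (m - n + j)%:~R * a n j
    - (2 * n - j)%:~R * a m (j - n) - (n - m + j)%:~R * a m j.

Definition antis1 (a : int -> int -> C) := forall m j, a m j = - a m (m - j).
Definition fin1 (f : int -> C) := exists N : int, forall j, N < `|j| -> f j = 0.

Lemma Einst a (HE : Ecoc a) m n k j x y : k = m + n -> x = j - m -> y = j - n ->
  (m - n)%:~R * a k j = (2 * m - j)%:~R * a n x + (m - n + j)%:~R * a n j
    - (2 * n - j)%:~R * a m y - (n - m + j)%:~R * a m j.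
Proof. by move=> -> -> ->; apply: HE. Qed.

Lemma chain_up (f : int -> C) (N J : int) (p q : int -> C) :
  (forall j, N < j -> f j = 0) ->
  (forall j, J <= j -> p j * f j = q j * f (j + 1)) ->
  (forall j, J <= j -> p j != 0) -> forall j, J <= j -> f j = 0.
Proof.
move=> hN hr hp.
have key : forall k : nat, forall j, J <= j -> N < j + k%:Z -> f j = 0.
  elim=> [|k IH] j hj hk.
    by apply: hN; move: hk; rewrite addr0.
  have h1 : f (j + 1) = 0 by apply: IH; lia.
  have := hr j hj; rewrite h1 mulr0 => /eqP; rewrite mulf_eq0 (negPf (hp j hj)) /=.
  by move/eqP.
move=> j hj; apply: (key (absz (N - j)).+1 j hj); lia.
Qed.

Lemma chain_down (f : int -> C) (N J : int) (p q : int -> C) :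
  (forall j, j < N -> f j = 0) ->
  (forall j, j <= J -> p j * f j = q j * f (j - 1)) ->
  (forall j, j <= J -> p j != 0) -> forall j, j <= J -> f j = 0.
Proof.
move=> hN hr hp.
have key : forall k : nat, forall j, j <= J -> j - k%:Z < N -> f j = 0.
  elim=> [|k IH] j hj hk.
    by apply: hN; move: hk; rewrite subr0.
  have h1 : f (j - 1) = 0 by apply: IH; lia.
  have := hr j hj; rewrite h1 mulr0 => /eqP; rewrite mulf_eq0 (negPf (hp j hj)) /=.
  by move/eqP.
move=> j hj; apply: (key (absz (j - N)).+1 j hj); lia.
Qed.

Lemma fin1_up f : fin1 f -> exists N, forall j, N < j -> f j = 0.
Proof. by case=> N hN; exists `|N|; move=> j hj; apply: hN; lia. Qed.
Lemma fin1_down f : fin1 f -> exists N, forall j, j < N -> f j = 0.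
Proof. by case=> N hN; exists (- `|N|); move=> j hj; apply: hN; lia. Qed.

Unset Implicit Arguments.
Set Strict Implicit.


Lemma x_negx (x : C) : x = - x -> x = 0.
Proof. move=> h; apply: (@mulIC 2) => //; apply: (lin1p h); ring. Qed.

Lemma core_zero (b : int -> int -> C) : (forall j, b 0 j = 0) -> antis1 b ->
  (forall m, fin1 (b m)) -> Ecoc b ->
  (forall j, j != 2 -> j != -1 -> b 1 j = 0) -> forall m j, b m j = 0.
Proof.
move=> h0 hA hF HE h1.
have ca : forall j, 2 <= j -> b (-1) j = 0.
  have [N hN] := fin1_up (hF (-1)).
  apply: (chain_up (N := N) (p := fun j => (1 - j)%:~R) (q := fun j => - (3 + j)%:~R)) => //.
  - move=> j hj.
    have E := Einst HE (m := 1) (n := -1) (k := 0) (x := j) (y := j + 2) (j := (j + 1)) (ltac:(by [])) (ltac:(ring)) (ltac:(ring)).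
    rewrite h0 h1 ?h1 in E; try lia.
    apply: (lin1n E); ring.
  - by move=> j hj; apply: intrC_neq0; lia.
have cb : forall j, j <= -3 -> b (-1) j = 0.
  by move=> j hj; rewrite hA ca ?oppr0 //; lia.
have b2a : forall j, 4 <= j -> b 2 j = 0.
  have [N hN] := fin1_up (hF 2).
  apply: (chain_up (N := N) (p := fun j => (3 - j)%:~R) (q := fun j => - (2 + j)%:~R)) => //.
  - move=> j hj.
    have E := Einst HE (m := 2) (n := -1) (k := 1) (x := j - 2) (y := j + 1) (j := j) (ltac:(by [])) (ltac:(by [])) (ltac:(ring)).
    rewrite h1 ?ca in E; try lia.
    apply: (lin1n E); ring.
  - by move=> j hj; apply: intrC_neq0; lia.
have c1 : b (-1) 1 = 0.
  have E := Einst HE (m := 2) (n := -1) (k := 1) (x := 1) (y := 4) (j := 3) (ltac:(by [])) (ltac:(by [])) (ltac:(by [])).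
  rewrite (h1 3) // (ca 3) // (b2a 4) // in E.
  apply: (lin1n E); ring.
have bm2a : forall j, j <= -4 -> b (-2) j = 0.
  have [N hN] := fin1_down (hF (-2)).
  apply: (chain_down (N := N) (p := fun j => (3 + j)%:~R) (q := fun j => - (2 - j)%:~R)) => //.
  - move=> j hj.
    have E := Einst HE (m := 1) (n := -2) (k := -1) (x := j - 1) (y := j + 2) (j := j) (ltac:(by [])) (ltac:(by [])) (ltac:(ring)).
    rewrite cb ?h1 in E; try lia.
    apply: (lin1n E); ring.
  - by move=> j hj; apply: intrC_neq0; lia.
have w0 : b 1 (-1) = 0.
  have E := Einst HE (m := 1) (n := -2) (k := -1) (x := -4) (y := -1) (j := (-3)) (ltac:(by [])) (ltac:(by [])) (ltac:(by [])).
  rewrite cb // bm2a // (h1 (-3)) // in E.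
  apply: (lin1n E); ring.
have b1z : forall j, b 1 j = 0.
  move=> j; case: (eqVneq j 2) => [->|j2].
    by rewrite hA (_ : 1 - 2 = -1) // w0 oppr0.
  case: (eqVneq j (-1)) => [->|jm1] //.
  by apply: h1.
have c0 : b (-1) 0 = 0.
  have E := Einst HE (m := 1) (n := -1) (k := 0) (x := 0) (y := 2) (j := 1) (ltac:(by [])) (ltac:(by [])) (ltac:(by [])).
  rewrite h0 c1 !b1z in E.
  apply: (lin1n E); ring.
have cz : forall j, b (-1) j = 0.
  move=> j.
  case: (ltrP 1 j) => hj1; first by apply: ca; lia.
  case: (ltrP j (-2)) => hj2; first by apply: cb; lia.
  have : (j = 1) \/ (j = 0) \/ (j = -1) \/ (j = -2) by lia.
  case=> [->|[->|[->|->]]] //.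
  - by rewrite hA (_ : -1 - -1 = 0) // c0 oppr0.
  - by rewrite hA (_ : -1 - -2 = 1) // c1 oppr0.
have b2z : forall j, b 2 j = 0.
  have E : forall j, (2 + j)%:~R * b 2 (j + 1) + (3 - j)%:~R * b 2 j = 0.
    move=> j.
    have E := Einst HE (m := 2) (n := -1) (k := 1) (x := j - 2) (y := j + 1) (j := j) (ltac:(by [])) (ltac:(by [])) (ltac:(ring)).
    rewrite !b1z !cz in E.
    apply: (lin1n E); ring.
  have e1 : b 2 1 = 0 by apply: x_negx; rewrite {1}hA.
  have e2 : b 2 2 = 0.
    have := E 1; rewrite e1 mulr0 addr0 => h.
    by apply: (@mulIC (2 + 1)) => //; exact: h.
  have e3 : b 2 3 = 0.
    have := E 2; rewrite e2 mulr0 addr0 => h.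
    by apply: (@mulIC (2 + 2)) => //; exact: h.
  have pos : forall j, 1 <= j -> b 2 j = 0.
    move=> j hj; case: (ltrP 3 j) => h3; first by apply: b2a; lia.
    have : (j = 1) \/ (j = 2) \/ (j = 3) by lia.
    by case=> [->|[->|->]].
  move=> j; case: (lerP 1 j) => hj; first exact: pos.
  by rewrite hA pos ?oppr0 //; lia.
have bm2z : forall j, b (-2) j = 0.
  have E : forall j, (2 - j)%:~R * b (-2) (j - 1) + (3 + j)%:~R * b (-2) j = 0.
    move=> j.
    have E := Einst HE (m := 1) (n := -2) (k := -1) (x := j - 1) (y := j + 2) (j := j) (ltac:(by [])) (ltac:(by [])) (ltac:(ring)).
    rewrite !b1z !cz in E.
    apply: (lin1n E); ring.
  have e1 : b (-2) (-1) = 0 by apply: x_negx; rewrite {1}hA.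
  have e2 : b (-2) (-2) = 0.
    have := E (-1); rewrite e1 mulr0 addr0 => h.
    by apply: (@mulIC (2 - -1)) => //; exact: h.
  have e3 : b (-2) (-3) = 0.
    have := E (-2); rewrite e2 mulr0 addr0 => h.
    by apply: (@mulIC (2 - -2)) => //; exact: h.
  have neg : forall j, j <= -1 -> b (-2) j = 0.
    move=> j hj; case: (ltrP j (-3)) => h3; first by apply: bm2a; lia.
    have : (j = -1) \/ (j = -2) \/ (j = -3) by lia.
    by case=> [->|[->|->]].
  move=> j; case: (lerP j (-1)) => hj; first exact: neg.
  by rewrite hA neg ?oppr0 //; lia.
have up : forall k : nat, forall j, b (k%:Z + 2) j = 0.
  elim=> [|k IH] j; first by rewrite add0r b2z.
  have E := Einst HE (m := 1) (n := k%:Z + 2) (k := k.+1%:Z + 2) (x := j - 1) (y := j - (k%:Z + 2)) (j := j) (ltac:(lia)) (ltac:(by [])) (ltac:(by [])).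
  rewrite !IH !b1z in E.
  apply: (@mulIC (1 - (k%:Z + 2))); first lia.
  apply: (lin1p E); ring.
have down : forall k : nat, forall j, b (- (k%:Z + 2)) j = 0.
  elim=> [|k IH] j; first by rewrite add0r bm2z.
  have E := Einst HE (m := -1) (n := - (k%:Z + 2)) (k := - (k.+1%:Z + 2)) (x := j + 1) (y := j + (k%:Z + 2)) (j := j) (ltac:(lia)) (ltac:(ring)) (ltac:(ring)).
  rewrite !IH !cz in E.
  apply: (@mulIC (-1 + (k%:Z + 2))); first lia.
  apply: (lin1p E); ring.
move=> m j.
case: (lerP 2 m) => hm.
  by rewrite (_ : m = (absz (m - 2))%:Z + 2) ?up //; lia.
case: (lerP m (-2)) => hm2.
  by rewrite (_ : m = - ((absz (- m - 2))%:Z + 2)) ?down //; lia.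
have : (m = 1) \/ (m = 0) \/ (m = -1) by lia.
by case=> [->|[->|->]]; [apply: b1z | apply: h0 | apply: cz].
Qed.

Definition cob (r : int -> C) (m j : int) : C :=
  (2 * m - j)%:~R * r (j - m) + (m + j)%:~R * r j.

Lemma Ecoc_cob r : Ecoc (cob r).
Proof.
move=> m n j; rewrite /cob.
have -> : j - (m + n) = j - m - n by ring.
have -> : j - n - m = j - m - n by ring.
ring.
Qed.

Lemma Ecoc_sub a b : Ecoc a -> Ecoc b -> Ecoc (fun m j => a m j - b m j).
Proof. move=> ha hb m n j; rewrite /= mulrBr ha hb; ring. Qed.

Lemma antis_cob r : (forall i, r (- i) = - r i) -> forall m j, cob r m j = - cob r m (m - j).
Proof.
move=> hr m j; rewrite /cob.
have -> : m - j - m = - j by ring.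
have -> : m - j = - (j - m) by ring.
rewrite !hr; ring.
Qed.

Lemma fin_cob r m : fin1 r -> fin1 (cob r m).
Proof.
case=> N hN; exists (`|N| + `|m|) => j hj; rewrite /cob !hN ?mulr0 ?addr0 //; lia.
Qed.

Section Constr.
Variable a1 : int -> C.
Variable N : int.
Hypothesis hN : forall j, N < `|j| -> a1 j = 0.

Let Nn := absz N.
Definition gg (k : int) : C := (k * (k - 1))%:~R * a1 k.
Definition SS (j : int) : C := \sum_(t < Nn.+1) gg (j + 1 + t%:Z).
Definition rp (j : int) : C :=
  if 2 <= j then - SS j / ((j - 1) * j * (j + 1))%:~R
  else if j == 1 then a1 1 / 2%:~R else 0.
Definition rr (j : int) : C := if 0 <= j then rp j else - rp (- j).

Lemma SS0 j : Nn%:Z <= j -> SS j = 0.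
Proof.
move=> hj; rewrite /SS big1 // => t _; rewrite /gg hN ?mulr0 //; rewrite /Nn in hj; lia.
Qed.

Lemma SSrec j : 0 <= j -> SS (j - 1) = gg j + SS j.
Proof.
move=> hj; rewrite /SS big_ord_recl big_ord_recr /=.
have -> : gg (j + 1 + Nn%:Z) = 0 by rewrite /gg hN ?mulr0 //; rewrite /Nn; lia.
congr (_ + _).
  by congr gg; rewrite /=; ring.
rewrite addr0; apply: eq_bigr => t _; congr gg; rewrite /bump /=; lia.
Qed.

Lemma rr_anti i : rr (- i) = - rr i.
Proof.
rewrite /rr; case: (lerP 0 i) => hi.
  case: (lerP 0 (- i)) => hi2; last by rewrite opprK.
  have -> : i = 0 by lia.
  by rewrite oppr0 /rp /= oppr0.
case: (lerP 0 (- i)) => hi2; last by lia.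
by rewrite opprK.
Qed.

Lemma rr_fin : fin1 rr.
Proof.
exists (Nn%:Z + 1) => j hj; rewrite /rr.
case: (lerP 0 j) => hj0.
  rewrite /rp ifT; last by lia.
  by rewrite SS0 ?oppr0 ?mul0r //; lia.
rewrite /rp ifT; last by lia.
by rewrite SS0 ?oppr0 ?mul0r ?oppr0 //; lia.
Qed.

Lemma rr_1 : a1 1 = cob rr 1 1.
Proof.
rewrite /cob /rr /= /rp /=.
field.
by [].
Qed.

Lemma rr_ge3 j : 3 <= j -> a1 j = cob rr 1 j.
Proof.
move=> hj; rewrite /cob /rr ifT; last by lia.
rewrite ifT; last by lia.
rewrite /rp ifT; last by lia.
rewrite ifT; last by lia.
rewrite (_ : j - 1 = j - 1) // SSrec; last by lia.
rewrite /gg.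
field.
have e1 : j%:~R + 1 = (j + 1)%:~R :> C by ring.
have e2 : j%:~R - 1 = (j - 1)%:~R :> C by ring.
have e3 : j%:~R - 1 - 1 = (j - 2)%:~R :> C by ring.
rewrite e3 e1 e2 !intrC_neq0 //; lia.
Qed.
End Constr.

Lemma core (a : int -> int -> C) : (forall j, a 0 j = 0) -> antis1 a ->
  (forall m, fin1 (a m)) -> Ecoc a ->
  exists r : int -> C, (forall i, r (- i) = - r i) /\ fin1 r /\
    forall m j, a m j = cob r m j.
Proof.
move=> h0 hA hF HE.
have [N hN] := hF 1.
pose r := rr (a 1) N.
have ranti : forall i, r (- i) = - r i by move=> i; apply: (@rr_anti (a 1) N).
exists r; split => //; split; first exact: (@rr_fin _ _ hN).
pose b := fun m j => a m j - cob r m j.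
have hb : forall m j, b m j = 0.
  apply: core_zero.
  - by move=> j; rewrite /b h0 /cob subr0; ring.
  - by move=> m j; rewrite /b hA (@antis_cob r ranti m j); ring.
  - move=> m; have [N1 h1] := hF m; have [N2 h2] := @fin_cob r m (@rr_fin _ _ hN).
    exists (`|N1| + `|N2|) => j hj; rewrite /b h1 ?h2 ?subr0 //; lia.
  - by apply: Ecoc_sub => //; apply: Ecoc_cob.
  - have e1 : forall j, j = 1 \/ 3 <= j -> b 1 j = 0.
      move=> j [->|hj]; rewrite /b.
        by rewrite (@rr_1 (a 1) N) subrr.
      by rewrite (@rr_ge3 _ _ hN _ hj) subrr.
    move=> j j2 jm1.
    case: (lerP 3 j) => h3; first by apply: e1; right.
    case: (eqVneq j 1) => [->|j1]; first by apply: e1; left.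
    have hb1 : b 1 j = - b 1 (1 - j).
      by rewrite /b hA (@antis_cob r ranti 1 j); ring.
    rewrite hb1 e1 ?oppr0 //.
    have : j <= -2 \/ j = 0 by lia.
    case=> [hj|->]; [right; lia | by left].
by move=> m j; apply/eqP; rewrite -subr_eq0; apply/eqP; apply: hb.
Qed.

Definition T := WWidx -> WWidx -> C.

Definition Ak (k : WWidx) (t : T) (p q : WWidx) : C :=
  (if p.1 == k.1 then (2 * k.2 - p.2)%:~R * t (p.1, p.2 - k.2) q else 0) +
  (if q.1 == k.1 then (2 * k.2 - q.2)%:~R * t p (q.1, q.2 - k.2) else 0).

Definition cocyc (d : WWidx -> T) := forall k l p q,
  (if k.1 == l.1 then (k.2 - l.2)%:~R * d (k.1, k.2 + l.2) p q else 0)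
    = Ak k (d l) p q - Ak l (d k) p q.

Definition antis (t : T) := forall p q, t p q = - t q p.
Definition fin (t : T) := exists N : int, forall p q : WWidx, N < `|(p.2 : int)| \/ N < `|(q.2 : int)| -> t p q = 0.

Lemma Ak_sub k t s p q : Ak k (fun p q => t p q - s p q) p q = Ak k t p q - Ak k s p q.
Proof. rewrite /Ak; case: ifP => _; case: ifP => _; ring. Qed.
Lemma Ak_add k t s p q : Ak k (fun p q => t p q + s p q) p q = Ak k t p q + Ak k s p q.
Proof. rewrite /Ak; case: ifP => _; case: ifP => _; ring. Qed.
Lemma Ak_zero k t p q : (forall p q, t p q = 0) -> Ak k t p q = 0.
Proof. by move=> h; rewrite /Ak !h !mulr0; case: ifP; case: ifP => _ _; rewrite ?addr0. Qed.

Lemma cocyc_cob r : cocyc (fun k => Ak k r).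
Proof.
move=> [kb km] [lb lm] [pb pi] [qb qi]; rewrite /Ak /=.
have e1 : pi - km - lm = pi - (km + lm) by ring.
have e2 : pi - lm - km = pi - (km + lm) by ring.
have e3 : qi - km - lm = qi - (km + lm) by ring.
have e4 : qi - lm - km = qi - (km + lm) by ring.
rewrite ?e1 ?e2 ?e3 ?e4.
by case: kb; case: lb; case: pb; case: qb => /=; ring.
Qed.

Lemma cocyc_sub d e : cocyc d -> cocyc e -> cocyc (fun k p q => d k p q - e k p q).
Proof.
move=> hd he k l p q; rewrite !Ak_sub.
have := hd k l p q; have := he k l p q.
case: ifP => _ h1 h2.
  by rewrite mulrBr h1 h2; ring.
transitivity ((Ak k (d l) p q - Ak l (d k) p q) - (Ak k (e l) p q - Ak l (e k) p q)).
  by rewrite -h1 -h2 subrr.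
ring.
Qed.

Lemma antis_Ak k r : antis r -> antis (Ak k r).
Proof.
move=> hr p q; rewrite /Ak (hr (q.1, q.2 - k.2) p) (hr q (p.1, p.2 - k.2)).
case: ifP => _; case: ifP => _; ring.
Qed.

Lemma fin_Ak k r : fin r -> fin (Ak k r).
Proof.
case=> N hN; exists (`|N| + `|k.2|) => p q hpq; rewrite /Ak.
case: hpq => h.
  rewrite (hN (p.1, p.2 - k.2) q); last by left => /=; lia.
  rewrite (hN p (q.1, q.2 - k.2)); last by left; lia.
  by rewrite !mulr0 !if_same addr0.
rewrite (hN (p.1, p.2 - k.2) q); last by right; lia.
rewrite (hN p (q.1, q.2 - k.2)); last by right => /=; lia.
by rewrite !mulr0 !if_same addr0.
Qed.

Lemma fin_sub t s : fin t -> fin s -> fin (fun p q => t p q - s p q).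
Proof.
case=> N1 h1 [N2 h2]; exists (`|N1| + `|N2|) => p q hpq.
by rewrite h1 ?h2 ?subr0 //; lia.
Qed.
Lemma fin_add t s : fin t -> fin s -> fin (fun p q => t p q + s p q).
Proof.
case=> N1 h1 [N2 h2]; exists (`|N1| + `|N2|) => p q hpq.
by rewrite h1 ?h2 ?addr0 //; lia.
Qed.
Lemma antis_sub t s : antis t -> antis s -> antis (fun p q => t p q - s p q).
Proof. by move=> h1 h2 p q; rewrite h1 h2; ring. Qed.
Lemma antis_add t s : antis t -> antis s -> antis (fun p q => t p q + s p q).
Proof. by move=> h1 h2 p q; rewrite h1 h2; ring. Qed.

Lemma Ak_inj0 t : fin t -> (forall k p q, Ak k t p q = 0) -> forall p q, t p q = 0.
Proof.
case=> N hN H [pb pi] q.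
pose m := `|N| + `|pi| + 1.
have := H (pb, m) (pb, pi + m) q; rewrite /Ak /= eqxx.
rewrite (_ : pi + m - m = pi); last by ring.
rewrite (hN (pb, pi + m)); last by left; rewrite /m /=; lia.
rewrite mulr0 if_same addr0 => h.
apply: (@mulIC (2 * m - (pi + m))); first by rewrite /m; lia.
exact: h.
Qed.

Definition w1 (p q : WWidx) : int := (if p.1 then 0 else p.2) + (if q.1 then 0 else q.2).
Definition w2 (p q : WWidx) : int := (if p.1 then p.2 else 0) + (if q.1 then q.2 else 0).
Definition wt1 (k : WWidx) : int := if k.1 then 0 else k.2.
Definition wt2 (k : WWidx) : int := if k.1 then k.2 else 0.
Definition L0 : WWidx := (false, 0).
Definition Lb0 : WWidx := (true, 0).

Lemma AL0 t p q : Ak L0 t p q = - (w1 p q)%:~R * t p q.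
Proof.
case: p => [pb pi]; case: q => [qb qi]; rewrite /Ak /w1 /= !subr0.
by case: pb; case: qb => /=; ring.
Qed.
Lemma ALb0 t p q : Ak Lb0 t p q = - (w2 p q)%:~R * t p q.
Proof.
case: p => [pb pi]; case: q => [qb qi]; rewrite /Ak /w2 /= !subr0.
by case: pb; case: qb => /=; ring.
Qed.

Lemma wsh1 k p q : p.1 = k.1 ->
  w1 (p.1, p.2 - k.2) q = w1 p q - wt1 k /\ w2 (p.1, p.2 - k.2) q = w2 p q - wt2 k.
Proof.
case: p => [pb pi]; case: k => [kb km] /= ->; rewrite /w1 /w2 /wt1 /wt2 /=.
by case: kb; split; ring.
Qed.
Lemma wsh2 k p q : q.1 = k.1 ->
  w1 p (q.1, q.2 - k.2) = w1 p q - wt1 k /\ w2 p (q.1, q.2 - k.2) = w2 p q - wt2 k.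
Proof.
case: q => [qb qi]; case: k => [kb km] /= ->; rewrite /w1 /w2 /wt1 /wt2 /=.
by case: kb; split; ring.
Qed.

Definition wsupp0 (t : T) := forall p q, (w1 p q != 0) || (w2 p q != 0) -> t p q = 0.

Lemma Ak_wshift k t p q : wsupp0 t -> (w1 p q != wt1 k) || (w2 p q != wt2 k) -> Ak k t p q = 0.
Proof.
move=> ht hw; rewrite /Ak.
have hw' : (w1 p q - wt1 k != 0) || (w2 p q - wt2 k != 0) by rewrite !subr_eq0.
case: eqP => e1.
  have [a1 a2] := wsh1 k p q e1.
  rewrite ht ?mulr0; last by rewrite a1 a2.
  case: eqP => e2; last by rewrite addr0.
  have [b1 b2] := wsh2 k p q e2.
  by rewrite ht ?mulr0 ?addr0 // b1 b2.
rewrite add0r; case: eqP => e2 //.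
have [b1 b2] := wsh2 k p q e2.
by rewrite ht ?mulr0 // b1 b2.
Qed.

Lemma L0rel d k p q : cocyc d ->
  (w1 p q - wt1 k)%:~R * d k p q = - Ak k (d L0) p q /\
  (w2 p q - wt2 k)%:~R * d k p q = - Ak k (d Lb0) p q.
Proof.
move=> hd; have h1 := hd L0 k p q; have h2 := hd Lb0 k p q.
rewrite AL0 in h1; rewrite ALb0 in h2.
case: k h1 h2 => [kb km]; rewrite /L0 /Lb0 /wt1 /wt2 /=.
case: kb => /= h1 h2; rewrite !add0r in h1 h2.
- split; first by apply: (lin1p h1); ring.
  by apply: (lin1p h2); ring.
- split; first by apply: (lin1p h1); ring.
  by apply: (lin1p h2); ring.
Qed.

Lemma zero_L0 d : cocyc d -> fin (d L0) -> fin (d Lb0) -> wsupp0 (d L0) -> wsupp0 (d Lb0) ->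
  (forall p q, d L0 p q = 0) /\ (forall p q, d Lb0 p q = 0).
Proof.
move=> hd f0 fb0 s0 sb0; split; apply: Ak_inj0 => // k p q.
- case hw : ((w1 p q != wt1 k) || (w2 p q != wt2 k)); first exact: Ak_wshift.
  move/negbT: hw; rewrite negb_or !negbK => /andP[/eqP e1 /eqP e2].
  have [h1 _] := L0rel d k p q hd.
  by move: h1; rewrite e1 subrr mul0r => /eqP; rewrite eq_sym oppr_eq0 => /eqP.
- case hw : ((w1 p q != wt1 k) || (w2 p q != wt2 k)); first exact: Ak_wshift.
  move/negbT: hw; rewrite negb_or !negbK => /andP[/eqP e1 /eqP e2].
  have [_ h2] := L0rel d k p q hd.
  by move: h2; rewrite e2 subrr mul0r => /eqP; rewrite eq_sym oppr_eq0 => /eqP.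
Qed.

Lemma weights d : cocyc d -> (forall p q, d L0 p q = 0) -> (forall p q, d Lb0 p q = 0) ->
  forall k p q, (w1 p q != wt1 k) || (w2 p q != wt2 k) -> d k p q = 0.
Proof.
move=> hd z0 zb0 k p q /orP[h|h]; have [h1 h2] := L0rel d k p q hd.
  rewrite Ak_zero // oppr0 in h1.
  by apply: (mulIC (z := w1 p q - wt1 k)) => //; rewrite subr_eq0.
rewrite Ak_zero // oppr0 in h2.
by apply: (mulIC (z := w2 p q - wt2 k)) => //; rewrite subr_eq0.
Qed.

Lemma w1C p q : w1 p q = w1 q p. Proof. by rewrite /w1 addrC. Qed.
Lemma w2C p q : w2 p q = w2 q p. Proof. by rewrite /w2 addrC. Qed.

Definition r1 (d : WWidx -> T) (p q : WWidx) : C :=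
  if w1 p q != 0 then - d L0 p q / (w1 p q)%:~R
  else if w2 p q != 0 then - d Lb0 p q / (w2 p q)%:~R else 0.

Lemma stepR1 d : cocyc d -> (forall k, antis (d k)) -> (forall k, fin (d k)) ->
  antis (r1 d) /\ fin (r1 d) /\
  (forall p q, d L0 p q - Ak L0 (r1 d) p q = 0) /\ (forall p q, d Lb0 p q - Ak Lb0 (r1 d) p q = 0).
Proof.
move=> hd hA hF.
have antr : antis (r1 d).
  move=> p q; rewrite /r1 (w1C q p) (w2C q p) (hA L0 q p) (hA Lb0 q p).
  by case: ifP => _; [|case: ifP => _]; ring.
have finr : fin (r1 d).
  have [N1 h1] := hF L0; have [N2 h2] := hF Lb0.
  exists (`|N1| + `|N2|) => p q hpq; rewrite /r1 h1 ?h2 ?oppr0 ?mul0r ?if_same //.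
    by case: hpq => h; [left|right]; lia.
  by case: hpq => h; [left|right]; lia.
have rel : forall p q, (w1 p q)%:~R * d Lb0 p q = (w2 p q)%:~R * d L0 p q.
  move=> p q; have := hd L0 Lb0 p q; rewrite AL0 ALb0 /= => h.
  by apply: (lin1p h); ring.
do 2!split => //.
set d1 := fun k p q => d k p q - Ak k (r1 d) p q.
have hd1 : cocyc d1 by apply: cocyc_sub => //; apply: cocyc_cob.
have := @zero_L0 d1 hd1 (@fin_sub _ _ (hF L0) (@fin_Ak L0 _ finr)) (@fin_sub _ _ (hF Lb0) (@fin_Ak Lb0 _ finr)).
apply.
- move=> p q hw; rewrite /d1 AL0 /r1.
  case: ifP => h1.
    field; exact: intrC_neq0.
  move: h1 hw => /negbFE h1; rewrite h1 /= => h2.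
  rewrite (eqP h1) mulr0z oppr0 mul0r subr0.
  have := rel p q; rewrite (eqP h1) mulr0z mul0r => /esym /eqP.
  by rewrite mulf_eq0 intr_eq0 (negPf h2) /= => /eqP.
- move=> p q hw; rewrite /d1 ALb0 /r1.
  case: ifP => h1.
    apply: (mulIC (z := w1 p q)) => //.
    transitivity ((w1 p q)%:~R * d Lb0 p q - (w2 p q)%:~R * d L0 p q); last by rewrite rel subrr.
    field; exact: intrC_neq0.
  move: h1 hw => /negbFE h1; rewrite h1 /= => h2; rewrite h2.
  field; exact: intrC_neq0.
Qed.

Definition r2 (c : C) (p q : WWidx) : C :=
  if (p == L0) && (q == Lb0) then c else if (p == Lb0) && (q == L0) then - c else 0.

Lemma r2_w c p q : r2 c p q != 0 -> (w1 p q = 0) /\ (w2 p q = 0).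
Proof.
rewrite /r2; case: (boolP ((p == L0) && (q == Lb0))) => [/andP[/eqP -> /eqP ->] _ | _].
  by split.
case: (boolP ((p == Lb0) && (q == L0))) => [/andP[/eqP -> /eqP ->] _|_].
  by split.
by rewrite eqxx.
Qed.

Lemma stepR3 d : cocyc d -> (forall k, antis (d k)) -> (forall k, fin (d k)) ->
  (forall p q, d L0 p q = 0) -> (forall p q, d Lb0 p q = 0) ->
  exists c, let e := fun k p q => d k p q - Ak k (r2 c) p q in
  (forall p q, e L0 p q = 0) /\ (forall p q, e Lb0 p q = 0) /\
  (forall k p q, p.1 != q.1 -> e k p q = 0).
Proof.
move=> hd hA hF z0 zb0.
set c := d (false, 1) (false, 1) (true, 0).
exists c => e.
have hAr : forall k p q, Ak k (r2 c) p q = Ak k (r2 c) p q by [].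
have e0 : forall p q, e L0 p q = 0.
  move=> p q; rewrite /e z0 AL0.
  case: (eqVneq (r2 c p q) 0) => [->|/r2_w [-> _]]; ring.
have eb0 : forall p q, e Lb0 p q = 0.
  move=> p q; rewrite /e zb0 ALb0.
  case: (eqVneq (r2 c p q) 0) => [->|/r2_w [_ ->]]; ring.
do 2!split => //.
have he : cocyc e by apply: cocyc_sub => //; apply: cocyc_cob.
have ant : forall k, antis (e k).
  move=> k; apply: antis_sub => //; apply: antis_Ak.
  move=> p q; rewrite /r2.
  case: eqP => [->|hp]; case: eqP => [->|hq] //=; rewrite ?eqxx /= ?oppr0 ?opprK //;
   try (case: eqP => //; case: eqP => //= *; by rewrite ?oppr0 ?opprK).
have W := weights e he e0 eb0.
have rel : forall m n : int,
    m%:~R * d (true, n) (false, 0) (true, n) = n%:~R * d (false, m) (false, m) (true, 0).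
  move=> m n; have := hd (false, m) (true, n) (false, m) (true, n).
  rewrite /Ak /= !subrr => h.
  have e1 : 2 * m - m = m by ring.
  have e2 : 2 * n - n = n by ring.
  rewrite e1 e2 in h.
  by apply: (lin1n h); ring.
have r2v : r2 c (false, 0) (true, 0) = c by rewrite /r2 /L0 /Lb0 !eqxx.
have eps1 : d (true, 1) (false, 0) (true, 1) = c.
  by have := rel 1 1; rewrite !mul1r.
have alpha0 : forall m, e (false, m) (false, m) (true, 0) = 0.
  move=> m; rewrite /e /Ak /= subrr r2v.
  have := rel m 1; rewrite eps1 mul1r => <-.
  have -> : 2 * m - m = m by ring.
  ring.
have eps0 : forall n, e (true, n) (false, 0) (true, n) = 0.
  move=> n; rewrite /e /Ak /= subrr r2v.
  have := rel 1 n; rewrite mul1r => ->.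
  have -> : 2 * n - n = n by ring.
  rewrite /c; ring.
move=> [kb km] [b i] [b' j] /= hb.
have eb : b' = ~~ b by move: hb; case: b; case: b'.
subst b'; clear hb.
case hw : ((w1 (b, i) (~~ b, j) != wt1 (kb, km)) || (w2 (b, i) (~~ b, j) != wt2 (kb, km))).
  exact: W.
move/negbT: hw; rewrite negb_or !negbK /w1 /w2 /wt1 /wt2 /=.
case: b; case: kb => /=; rewrite ?add0r ?addr0 => /andP[/eqP e1 /eqP e2]; subst.
- by rewrite ant eps0 oppr0.
- by rewrite ant alpha0 oppr0.
- by rewrite eps0.
- by rewrite alpha0.
Qed.

Definition r3 (rho : bool -> int -> C) (p q : WWidx) : C :=
  if (p.1 == q.1) && (p.2 + q.2 == 0) then rho p.1 p.2 else 0.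

Lemma stepR5 d : cocyc d -> (forall k, antis (d k)) -> (forall k, fin (d k)) ->
  (forall p q, d L0 p q = 0) -> (forall p q, d Lb0 p q = 0) ->
  (forall k p q, p.1 != q.1 -> d k p q = 0) ->
  exists r, antis r /\ fin r /\ forall k p q, d k p q = Ak k r p q.
Proof.
move=> hd hA hF z0 zb0 mix.
have W := weights d hd z0 zb0.
have S : forall k p q, ~~ [&& p.1 == k.1, q.1 == k.1 & p.2 + q.2 == k.2] -> d k p q = 0.
  move=> [kb km] [pb pi] [qb qj] /= h.
  case: (eqVneq pb qb) => [e|ne]; last by apply: mix.
  subst qb.
  case hw : ((w1 (pb, pi) (pb, qj) != wt1 (kb, km)) || (w2 (pb, pi) (pb, qj) != wt2 (kb, km))).
    exact: W.
  move/negbT: hw; rewrite negb_or !negbK /w1 /w2 /wt1 /wt2 /=.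
  case: pb h; case: kb => /= h; rewrite ?add0r ?addr0.
  - by move=> /eqP e; rewrite e eqxx in h.
  - by move=> /andP[/eqP <- _]; apply: z0.
  - by move=> /andP[_ /eqP <-]; apply: zb0.
  - by move=> /andP[/eqP e _]; rewrite e eqxx in h.
pose a := fun (b : bool) (m j : int) => d (b, m) (b, j) (b, m - j).
have core_b : forall b, exists r : int -> C, (forall i, r (- i) = - r i) /\ fin1 r /\
    forall m j, a b m j = cob r m j.
  move=> b; apply: core.
  - by move=> j; rewrite /a; case: b; [apply: zb0 | apply: z0].
  - move=> m j; rewrite /a (_ : m - (m - j) = j); last by ring.
    exact: hA.
  - move=> m; have [N hN] := hF (b, m); exists N => j hj; rewrite /a hN //; by left.
  - move=> m n j; rewrite /a.
    have := hd (b, m) (b, n) (b, j) (b, m + n - j); rewrite /Ak /= !eqxx => h.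
    have e1 : m + n - j - m = n - j by ring.
    have e2 : m + n - j - n = m - j by ring.
    have e3 : m + n - j = n - (j - m) by ring.
    have e4 : m + n - j = m - (j - n) by ring.
    rewrite e1 e2 in h.
    rewrite -e3 -e4.
    by apply: (lin1p h); ring.
have [rf [rfA [rfF rfE]]] := core_b false.
have [rt [rtA [rtF rtE]]] := core_b true.
pose rho := fun b : bool => if b then rt else rf.
exists (r3 rho); split; [|split].
- move=> [pb pi] [qb qj]; rewrite /r3 /=.
  case: (eqVneq pb qb) => [<-|ne]; last by rewrite /= oppr0.
  rewrite /= addrC; case: eqP => // h; last by rewrite oppr0.
  have -> : pi = - qj by lia.
  by rewrite /rho; case: pb; rewrite ?rtA ?rfA.
- have [N1 h1] := rfF; have [N2 h2] := rtF.
  exists (`|N1| + `|N2|) => [[pb pi] [qb qj]] /= hpq; rewrite /r3 /=.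
  case: andP => // [[_ /eqP e]].
  have hpi : `|N1| + `|N2| < `|pi| by case: hpq => h; lia.
  by rewrite /rho; case: pb; [apply: h2 | apply: h1]; lia.
- move=> [kb km] [pb pi] [qb qj].
  case hc : [&& pb == kb, qb == kb & pi + qj == km]; last first.
    rewrite S /=; last by rewrite hc.
    rewrite /Ak /r3 /=.
    have c1 : pb == kb -> ((pb == qb) && (pi - km + qj == 0)) = false.
      move=> /eqP e1; apply/negbTE/negP => /andP[/eqP e2 /eqP e3].
      have e4 : pi + qj == km by apply/eqP; lia.
      by move: hc; rewrite -e2 e1 !eqxx e4.
    have c2 : qb == kb -> ((pb == qb) && (pi + (qj - km) == 0)) = false.
      move=> /eqP e1; apply/negbTE/negP => /andP[/eqP e2 /eqP e3].
      have e4 : pi + qj == km by apply/eqP; lia.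
      by move: hc; rewrite e2 e1 !eqxx e4.
    case: ifP => h1; first rewrite (c1 h1) mulr0.
      by case: ifP => h2; first rewrite (c2 h2) mulr0; rewrite addr0.
    by case: ifP => h2; first rewrite (c2 h2) mulr0; rewrite addr0.
  move/and3P: hc => [/eqP e1 /eqP e2 /eqP e3]; subst pb qb km.
  have E : d (kb, pi + qj) (kb, pi) (kb, qj) = cob (rho kb) (pi + qj) pi.
    have := (if kb as b return (a b (pi + qj) pi = cob (rho b) (pi + qj) pi)
             then rtE (pi + qj) pi else rfE (pi + qj) pi).
    by rewrite /a (_ : pi + qj - pi = qj) //; ring.
  rewrite E /cob /Ak /r3 /= eqxx /=.
  rewrite (_ : pi - (pi + qj) + qj = 0); last by ring.
  rewrite (_ : pi + (qj - (pi + qj)) = 0); last by ring.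
  rewrite eqxx /=; ring.
Qed.

Lemma antis_r2 c : antis (r2 c).
Proof.
move=> p q; rewrite /r2.
case: eqP => [->|hp]; case: eqP => [->|hq] //=; rewrite ?eqxx /= ?oppr0 ?opprK //;
   try (case: eqP => //; case: eqP => //= *; by rewrite ?oppr0 ?opprK).
Qed.

Lemma fin_r2 c : fin (r2 c).
Proof.
exists 0 => p q hpq; rewrite /r2.
case: hpq => h.
  have n1 : (p == L0) = false by apply/negbTE; apply/eqP => e; rewrite e /L0 /= in h.
  have n2 : (p == Lb0) = false by apply/negbTE; apply/eqP => e; rewrite e /Lb0 /= in h.
  by rewrite n1 n2.
have n1 : (q == L0) = false by apply/negbTE; apply/eqP => e; rewrite e /L0 /= in h.
have n2 : (q == Lb0) = false by apply/negbTE; apply/eqP => e; rewrite e /Lb0 /= in h.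
by rewrite n1 n2 !andbF.
Qed.

Theorem comb d : cocyc d -> (forall k, antis (d k)) -> (forall k, fin (d k)) ->
  exists r, antis r /\ fin r /\ forall k p q, d k p q = Ak k r p q.
Proof.
move=> hd hA hF.
have [ar1 [fr1 [z0 zb0]]] := stepR1 d hd hA hF.
set d1 := fun k p q => d k p q - Ak k (r1 d) p q.
have hd1 : cocyc d1 by apply: cocyc_sub => //; apply: cocyc_cob.
have hA1 : forall k, antis (d1 k) by move=> k; apply: antis_sub => //; apply: antis_Ak.
have hF1 : forall k, fin (d1 k) by move=> k; apply: fin_sub => //; apply: fin_Ak.
have [c [e0 [eb0 mix]]] := stepR3 d1 hd1 hA1 hF1 z0 zb0.
set d2 := fun k p q => d1 k p q - Ak k (r2 c) p q.
have hd2 : cocyc d2 by apply: cocyc_sub => //; apply: cocyc_cob.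
have hA2 : forall k, antis (d2 k)
  by move=> k; apply: antis_sub => //; apply: antis_Ak; apply: antis_r2.
have hF2 : forall k, fin (d2 k)
  by move=> k; apply: fin_sub => //; apply: fin_Ak; apply: fin_r2.
have [r [ar [fr E]]] := stepR5 d2 hd2 hA2 hF2 e0 eb0 mix.
exists (fun p q => r1 d p q + r2 c p q + r p q); split; [|split].
- by apply: antis_add; [apply: antis_add => //; apply: antis_r2|].
- by apply: fin_add; [apply: fin_add => //; apply: fin_r2|].
- move=> k p q; rewrite !Ak_add -E /d2 /d1; ring.
Qed.

Section Pick.
Variable K : choiceType.
Lemma pick_seq (s : seq K) (F : K -> C) m0 : uniq s ->
  \sum_(m <- s) F m * (m == m0)%:R = if m0 \in s then F m0 else 0.
Proof.
move=> us; case: ifP => hin.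
  rewrite (bigD1_seq m0) //= eqxx mulr1 big1 ?addr0 // => m /negPf ->; by rewrite mulr0.
rewrite big1_seq // => m /andP[_ hm]; case: eqP => [e|]; last by rewrite mulr0.
by move: hm; rewrite e hin.
Qed.

Lemma pick_supp (t : {malg C[K]}) (F : K -> C) m0 :
  \sum_(m <- msupp t) t@_m * F m * (m == m0)%:R = t@_m0 * F m0.
Proof.
rewrite (pick_seq (msupp t) (fun m => t@_m * F m) m0 (fset_uniq _)).
by case: ifP => // /negbT /mcoeff_outdom ->; rewrite mul0r.
Qed.
Lemma mcoeff_sum (I : Type) (s : seq I) (F : I -> {malg C[K]}) k :
  (\sum_(i <- s) F i)@_k = \sum_(i <- s) (F i)@_k.
Proof.
elim: s => [|a s IH]; first by rewrite !big_nil mcoeff0.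
by rewrite !big_cons mcoeffD IH.
Qed.
End Pick.

Lemma e_coef (i j : WWidx) : (e i)@_j = (i == j)%:R.
Proof. by rewrite /e mcoeffU. Qed.

Lemma tens_coef a b p q : (tens a b)@_(p, q) = a@_p * b@_q.
Proof.
rewrite /tens raddf_sum /=.
transitivity (\sum_(i <- msupp a) a@_i * b@_q * (i == p)%:R); last by rewrite pick_supp.
apply: eq_bigr => i _; rewrite raddf_sum /=.
transitivity (\sum_(j <- msupp b) b@_j * (a@_i * (i == p)%:R) * (j == q)%:R);
  last by rewrite pick_supp; ring.
apply: eq_bigr => j _; rewrite mcoeffZ mcoeffU xpair_eqE.
by case: (i == p); case: (j == q) => /=; ring.
Qed.

Lemma brb_coef k i p : (brb k i)@_p =
  if (i.1 == k.1) && (p.1 == k.1) && (i.2 == p.2 - k.2) then (2 * k.2 - p.2)%:~R else 0.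
Proof.
case: k => [kb km]; case: i => [ib ii]; case: p => [pb pi]; rewrite /brb /=.
case: (eqVneq kb ib) => [ekb|hne]; last first.
  by rewrite mcoeff0.
subst ib; rewrite /= mcoeffZ e_coef xpair_eqE /= ?eqxx /=.
case: (eqVneq kb pb) => [ekp|hp]; last by rewrite /= mulr0.
subst pb; rewrite ?eqxx /=.
case: (eqVneq (km + ii) pi) => [eq|hq].
  subst pi.
  rewrite (_ : ii == km + ii - km) ?mulr1; last by apply/eqP; ring.
  congr (_%:~R); ring.
rewrite mulr0; case: eqP => // h; exfalso; move/eqP: hq; apply; rewrite h; ring.
Qed.

Lemma msupp_e j : msupp (e j) = [fset j]%fset.
Proof. by rewrite /e msuppU oner_eq0. Qed.

Lemma br_e_coef x j p : (br x (e j))@_p = \sum_(i <- msupp x) x@_i * (brb i j)@_p.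
Proof.
rewrite /br mcoeff_sum; apply: eq_bigr => i _.
by rewrite msupp_e big_seq_fset1 mcoeffZ /e mcoeffUU mulr1.
Qed.

Lemma pt1 i p q (m : WWidx * WWidx) : (brb i m.1)@_p * (m.2 == q)%:R =
  (if p.1 == i.1 then (2 * i.2 - p.2)%:~R else 0) * (m == ((p.1, p.2 - i.2), q))%:R.
Proof.
rewrite brb_coef; case: m => [[mb mi] mj]; rewrite /= !xpair_eqE.
case: (eqVneq p.1 i.1) => h /=; last by rewrite !andbF ?mul0r.
rewrite andbT -h.
by case: (mb == p.1); case: (mi == p.2 - i.2); case: (mj == q) => /=; ring.
Qed.

Lemma pt2 i p q (m : WWidx * WWidx) : (m.1 == p)%:R * (brb i m.2)@_q =
  (if q.1 == i.1 then (2 * i.2 - q.2)%:~R else 0) * (m == (p, (q.1, q.2 - i.2)))%:R.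
Proof.
rewrite brb_coef; case: m => [mp [mb mi]]; rewrite /= !xpair_eqE.
case: (eqVneq q.1 i.1) => h /=; last by rewrite !andbF ?mulr0 ?mul0r.
rewrite andbT -h.
by case: (mp == p); case: (mb == q.1); case: (mi == q.2 - i.2) => /=; ring.
Qed.

Definition coef (t : WW2) : T := fun p q => t@_(p, q).

Lemma coefD2 (u v : WW2) (k : WWidx * WWidx) : (u + v)@_k = u@_k + v@_k.
Proof. exact: mcoeffD. Qed.
Lemma coefZ2 (c : C) (u : WW2) (k : WWidx * WWidx) : (c *: u)@_k = c * u@_k.
Proof. exact: mcoeffZ. Qed.

Lemma term_coef x (c : C) (a b p q : WWidx) :
  (c *: (tens (br x (e a)) (e b) + tens (e a) (br x (e b))))@_(p, q) =
  c * ((\sum_(i <- msupp x) x@_i * (brb i a)@_p) * (b == q)%:R +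
       (a == p)%:R * \sum_(i <- msupp x) x@_i * (brb i b)@_q).
Proof.
rewrite coefZ2 coefD2; congr (_ * (_ + _)).
  by rewrite (tens_coef (br x (e a)) (e b) p q) br_e_coef e_coef.
by rewrite (tens_coef (e a) (br x (e b)) p q) br_e_coef e_coef.
Qed.

Lemma inner_coef i (t : WW2) (p q : WWidx) :
  \sum_(m <- msupp t) t@_m * ((brb i m.1)@_p * (m.2 == q)%:R + (m.1 == p)%:R * (brb i m.2)@_q)
  = Ak i (coef t) p q.
Proof.
transitivity (\sum_(m <- msupp t) t@_m * (if p.1 == i.1 then (2 * i.2 - p.2)%:~R else 0) * (m == ((p.1, p.2 - i.2), q))%:R
   + \sum_(m <- msupp t) t@_m * (if q.1 == i.1 then (2 * i.2 - q.2)%:~R else 0) * (m == (p, (q.1, q.2 - i.2)))%:R).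
  rewrite -big_split /=.
 apply: eq_bigr => m _.
  by rewrite pt1 pt2 mulrDr !mulrA.
rewrite /Ak /coef; congr (_ + _).
rewrite pick_supp.
 (case: ifP => _; ring).
rewrite pick_supp.
 (case: ifP => _; ring).
Qed.

Lemma act_coef x t (p q : WWidx) : (act x t)@_(p, q) = \sum_(i <- msupp x) x@_i * Ak i (coef t) p q.
Proof.
rewrite /act mcoeff_sum.
pose B i (m : WWidx * WWidx) := (brb i m.1)@_p * (m.2 == q)%:R + (m.1 == p)%:R * (brb i m.2)@_q.
transitivity (\sum_(m <- msupp t) \sum_(i <- msupp x) x@_i * (t@_m * B i m)).
  apply: eq_bigr => m _.
  rewrite term_coef.
  rewrite mulr_suml.
  rewrite mulr_sumr.
  rewrite -big_split /=.
  rewrite mulr_sumr.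
  by apply: eq_bigr => i _; rewrite /B; move: (x@_i) (t@_m) ((brb i m.1)@_p) ((brb i m.2)@_q) ((m.2 == q)%:R) ((m.1 == p)%:R) => X Y A1 A2 A3 A4; ring.
rewrite exchange_big /=.
apply: eq_bigr => i _.
rewrite -mulr_sumr; congr (_ * _).
exact: inner_coef.
Qed.

Lemma act_e_coef k t (p q : WWidx) : (act (e k) t)@_(p, q) = Ak k (coef t) p q.
Proof.
by rewrite act_coef msupp_e big_seq_fset1 e_coef eqxx mul1r.
Qed.

Lemma coefB2 (u v : WW2) (k : WWidx * WWidx) : (u - v)@_k = u@_k - v@_k.
Proof. exact: mcoeffB. Qed.

Lemma wedge_coef a b (p q : WWidx) : (wedge a b)@_(p, q) = a@_p * b@_q - b@_p * a@_q.
Proof.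
rewrite /wedge coefB2; congr (_ - _); exact: tens_coef.
Qed.

Lemma wedge_antis (s : seq (WW * WW)) :
  antis (coef (\sum_(pr <- s) wedge pr.1 pr.2)).
Proof.
move=> p q; rewrite /coef !mcoeff_sum -sumrN; apply: eq_bigr => pr _.
rewrite !wedge_coef; move: (pr.1@_p) (pr.1@_q) (pr.2@_p) (pr.2@_q) => A B C' D; ring.
Qed.

Lemma leq_sum_in (U : eqType) (s : seq U) (F : U -> nat) x :
  x \in s -> (F x <= \sum_(y <- s) F y)%N.
Proof.
elim: s => //= a s IH; rewrite in_cons big_cons => /orP[/eqP ->|h].
  exact: leq_addr.
exact: leq_trans (IH h) (leq_addl _ _).
Qed.

Lemma coef_fin t : fin (coef t).
Proof.
pose N := (\sum_(m <- msupp t) (absz m.1.2 + absz m.2.2))%N.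
exists N%:Z => p q h; rewrite /coef; apply: mcoeff_outdom; apply/negP => hin.
have := @leq_sum_in _ _ (fun m : WWidx * WWidx => (absz m.1.2 + absz m.2.2)%N) _ hin.
rewrite -/N /= => hle.
case: h => h; lia.
Qed.

Definition idx (N : nat) : seq WWidx :=
  [seq (b, (i%:Z - N%:Z)) | b <- [:: false; true], i <- iota 0 (2 * N).+1].

Lemma idx_mem N (p : WWidx) : `|(p.2 : int)| <= N%:Z -> p \in idx N.
Proof.
case: p => b j /= h; apply/allpairsP; exists (b, absz (j + N%:Z)); split => /=.
- by case: b.
- rewrite in_cons mem_iota; case: eqP => //= hne; apply/andP; split; lia.
- congr (_, _); lia.
Qed.

Definition PS N := [seq (p, q) | p <- idx N, q <- idx N].
Definition Dset N : {fset WWidx * WWidx} := seq_fset tt (PS N).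

Lemma Dset_mem N p q : ((p, q) \in Dset N) = (p \in idx N) && (q \in idx N).
Proof.
rewrite seq_fsetE; apply/allpairsP/andP.
  by case=> [[a b] [/= ha hb [-> ->]]].
by case=> hp hq; exists (p, q).
Qed.

Definition mkR (r : T) (N : nat) : WW2 := [malg m in Dset N => r m.1 m.2].

Lemma mkR_coef r N p q : (mkR r N)@_(p, q) = if (p, q) \in Dset N then r p q else 0.
Proof. by rewrite /mkR mcoeffE. Qed.

Lemma coefZ1 (c : C) (u : WW) (k : WWidx) : (c *: u)@_k = c * u@_k.
Proof. exact: mcoeffZ. Qed.

Lemma mkR_wedge r N : antis r -> in_wedge2 (mkR r N).
Proof.
move=> ar.
exists [seq ((r m.1 m.2 / 2) *: e m.1, e m.2) | m <- Dset N].
apply/malgP => -[p q]; rewrite mkR_coef mcoeff_sum big_map.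
transitivity (\sum_(m <- Dset N) (r m.1 m.2 / 2) * (m == (p, q))%:R
              - \sum_(m <- Dset N) (r m.1 m.2 / 2) * (m == (q, p))%:R); last first.
  rewrite -sumrB; apply: eq_bigr => -[a b] _ /=.
  rewrite wedge_coef !coefZ1 !e_coef !xpair_eqE.
  move: (r a b / 2) => c.
  by case: (a == p); case: (b == q); case: (a == q); case: (b == p) => /=; ring.
rewrite !pick_seq ?seq_fset_uniq // !Dset_mem [(q \in idx N) && _]andbC.
case: ifP => _; last by rewrite subrr.
by rewrite (ar q p); field.
Qed.

Lemma Ak_ext k (f g : T) p q : (forall p q, f p q = g p q) -> Ak k f p q = Ak k g p q.
Proof. by move=> h; rewrite /Ak !h. Qed.

Lemma br_ee k l : br (e k) (e l) = brb k l.
Proof.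
by rewrite /br !msupp_e !big_seq_fset1 !e_coef !eqxx mulr1 scale1r.
Qed.

Lemma xdecomp (x : WW) : x = \sum_(k <- msupp x) x@_k *: e k.
Proof.
rewrite {1}(monalgE x); apply: eq_bigr => k _.
apply/malgP => j; rewrite mcoeffU coefZ1 e_coef.
by rewrite mulr_natr.
Qed.

Theorem theorem2 (delta : WW -> WW2)
  (delta_linear : forall (a : C) (x y : WW),
      delta (a *: x + y) = a *: delta x + delta y)
  (delta_wedge : forall x : WW, in_wedge2 (delta x))
  (delta_cocycle : forall x y : WW,
      delta (br x y) = act x (delta y) - act y (delta x)) :
  exists r : WW2, in_wedge2 r /\ forall x : WW, delta x = act x r.
Proof.
have d0 : delta 0 = 0.
  have h := delta_linear 1 0 0; rewrite scale1r addr0 (scale1r (delta 0)) in h.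
  by apply: (addrI (delta 0)); rewrite addr0 -h.
have dZ : forall a x, delta (a *: x) = a *: delta x.
  by move=> a x; have := delta_linear a x 0; rewrite addr0 d0 addr0.
have dsum : forall (s : seq WWidx) (c : WWidx -> C),
    delta (\sum_(k <- s) c k *: e k) = \sum_(k <- s) c k *: delta (e k).
  move=> s c; elim: s => [|a s IH]; first by rewrite !big_nil d0.
  by rewrite !big_cons delta_linear IH.
pose d := fun k => coef (delta (e k)).
have hd : cocyc d.
  move=> k l p q.
  have := delta_cocycle (e k) (e l); rewrite br_ee => /(congr1 (mcoeff (p, q))).
  rewrite coefB2 => h.
  transitivity ((act (e k) (delta (e l)))@_(p, q) - (act (e l) (delta (e k)))@_(p, q)); last first.
    by congr (_ - _); apply: act_e_coef.
  rewrite -h /brb; case: ifP => _; last by rewrite d0 mcoeff0.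
  by rewrite dZ coefZ2.
have hA : forall k, antis (d k).
  move=> k; rewrite /d; have [s ->] := delta_wedge (e k); exact: wedge_antis.
have hF : forall k, fin (d k) by move=> k; exact: coef_fin.
have [r [ar [[N0 fr] E]]] := comb d hd hA hF.
pose N := absz N0.
exists (mkR r N); split; first exact: mkR_wedge.
have cR : forall p q, coef (mkR r N) p q = r p q.
  move=> p q; rewrite /coef mkR_coef Dset_mem.
  case: ifP => // hin; symmetry; apply: fr.
  case: (lerP `|(p.2 : int)| N%:Z) => hp.
    case: (lerP `|(q.2 : int)| N%:Z) => hq.
      by move: hin; rewrite !idx_mem.
    by right; rewrite /N in hq; lia.
  by left; rewrite /N in hp; lia.
move=> x; apply/malgP => -[p q].
rewrite {1}(xdecomp x) dsum mcoeff_sum act_coef.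
apply: eq_bigr => k _; rewrite coefZ2; congr (_ * _).
transitivity (d k p q); first by [].
rewrite (E k p q); apply: Ak_ext => p' q'; by rewrite cR.
Qed.
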